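(* Let $\mathcal{L}$ be a horizontal segment $EF$ of length $1$ in the plane, and let $\mathcal{R}$ be a rectangle with vertices $A,B,C,D$ in counterclockwise order, $|AB|=|CD|=\frac12$, $|BC|=|AD|=\frac14$, labelled so that, with $O_1$ the centre of $\mathcal{R}$, $A=O_1+\frac{\sqrt5}{8}(\cos\alpha,\sin\alpha)$ for some $\alpha\in[\theta_0,\theta_0+\pi)$, where $\theta_0=\arctan\frac12$. Then $\mu(\mathcal{L},\mathcal{R})\geq \frac{\sqrt5}{8}\sin\alpha$.
   Context: $\mu(K_1,\dots,K_n)$ denotes the area of the convex hull of $K_1\cup\dots\cup K_n$. (For any such rectangle exactly one labelling satisfying these conditions exists; then the vector $\overrightarrow{CA}$ has argument $\alpha$ and $\overrightarrow{CD}$ has argument $\alpha-\theta_0$.) *)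

(* Defs.v *)
From HB Require Import structures.
From mathcomp Require Import all_boot all_order all_algebra.
From mathcomp Require Import all_classical all_reals all_analysis.
Set Implicit Arguments. Unset Strict Implicit. Unset Printing Implicit Defensive.
Import Order.TTheory GRing.Theory Num.Theory.
Local Open Scope classical_set_scope.
Local Open Scope ring_scope.

Section Defs.
Variable R : realType.
Definition pt := (R * R)%type.

Definition dist (P Q : pt) : R :=
  Num.sqrt ((P.1 - Q.1) ^+ 2 + (P.2 - Q.2) ^+ 2).

Definition chull (S : set pt) : set pt :=
  [set p | exists (n : nat) (w : 'I_n -> R) (x : 'I_n -> pt),
      (forall i, 0 <= w i) /\ \sum_(i < n) w i = 1 /\
      (forall i, S (x i)) /\
      p = (\sum_(i < n) w i * (x i).1, \sum_(i < n) w i * (x i).2)].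

Definition area (S : set pt) : \bar R :=
  ((@lebesgue_measure R) \x (@lebesgue_measure R))%E S.

Definition mu2 (K1 K2 : set pt) : \bar R := area (chull (K1 `|` K2)).

Definition segment (E F : pt) : set pt := chull [set E; F].
Definition quad (A B C D : pt) : set pt := chull [set A; B; C; D].

(* z-component of the cross product (Q - P) x (S - Q) *)
Definition cross3 (P Q S : pt) : R :=
  (Q.1 - P.1) * (S.2 - Q.2) - (Q.2 - P.2) * (S.1 - Q.1).

Definition ccw_rectangle (A B C D : pt) : Prop :=
  (B.1 - A.1 = C.1 - D.1 /\ B.2 - A.2 = C.2 - D.2) /\
  (B.1 - A.1) * (C.1 - B.1) + (B.2 - A.2) * (C.2 - B.2) = 0 /\
  0 < cross3 A B C.

End Defs.

(* Main.v *)
Require Import Defs.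
From HB Require Import structures.
From mathcomp Require Import all_boot all_order all_algebra.
From mathcomp Require Import all_classical all_reals all_analysis.
From mathcomp Require Import ring lra measurable_realfun.
Import Order.TTheory GRing.Theory Num.Theory numFieldNormedType.Exports.
Local Open Scope classical_set_scope.
Local Open Scope ring_scope.

Section S.
Variable R : realType.
Local Notation leb := (@lebesgue_measure R).

Let Fq (c a : R) : R -> R := (c/2) \*: ((id - cst a) * (id - cst a)).
Let fl (c a : R) : R -> R := c \*: (id - cst a).

Let dF (c a x : R) : is_derive x (1:R) (Fq c a) (c * (x - a)).
Proof.
apply: is_derive_eq.
change ((c/2) * ((x - a) * (1-0) + (x-a) * (1-0)) = c*(x-a)); field.
by [].
Qed.

Let df (c a x : R) : is_derive x (1:R) (fl c a) c.
Proof.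
apply: is_derive_eq.
change (c * (1 - 0) = c); ring.
Qed.

Lemma int_aff (c a lo hi : R) : lo < hi ->
  (\int[leb]_(x in `[lo, hi]) (c * (x - a))%:E =
   (c * ((hi - a) ^+ 2 - (lo - a) ^+ 2) / 2)%:E)%E.
Proof.
move=> lh.
have -> : (c * ((hi - a) ^+ 2 - (lo - a) ^+ 2) / 2) = Fq c a hi - Fq c a lo.
  rewrite /Fq /=; change (c * ((hi - a) ^+ 2 - (lo - a) ^+ 2) / 2 = c/2 * ((hi-a)*(hi-a)) - c/2 * ((lo-a)*(lo-a))).
  by rewrite !expr2; ring.
rewrite EFinB -(@continuous_FTC2 _ (fl c a)) //.
- apply: derivable_within_continuous => z _.
  exact: (@ex_derive _ _ _ _ _ _ _ (df c a z)).
- split.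
  + move=> z _; exact: (@ex_derive _ _ _ _ _ _ _ (dF c a z)).
  + apply: cvg_at_right_filter; apply/differentiable_continuous.
    rewrite -derivable1_diffP; exact: (@ex_derive _ _ _ _ _ _ _ (dF c a _)).
  + apply: cvg_at_left_filter; apply/differentiable_continuous.
    rewrite -derivable1_diffP; exact: (@ex_derive _ _ _ _ _ _ _ (dF c a _)).
- move=> x _; rewrite derive1E; rewrite (@derive_val _ _ _ _ _ _ _ (dF c a x)) /fl /=.
  by [].
Qed.

Let fl_cont (c a : R) : continuous (fun x : R => fl c a x).
Proof.
move=> x; apply: (@differentiable_continuous _ _ _ x); rewrite -derivable1_diffP.
exact: (@ex_derive _ _ _ _ _ _ _ (df c a x)).
Qed.

Definition pc (a m k : R) : R -> R :=
  (fl (k / (m - a)) a) \_ `]Num.min a m, Num.max a m[.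

Lemma pc_meas (a m k : R) : measurable_fun setT (EFin \o pc a m k).
Proof.
apply/measurable_EFinP; rewrite /pc -measurable_restrictT //.
apply: measurable_funTS; exact: continuous_measurable_fun (fl_cont _ _).
Qed.

Lemma pc_int (a m k : R) :
  (\int[leb]_x (EFin \o pc a m k) x = (k * `|m - a| / 2)%:E)%E.
Proof.
rewrite /pc -restrict_EFin -integral_mkcond.
have [am|am|<-] := ltgtP a m.
- rewrite -(@integral_itv_bndoo _ _ _ _ true false); last first.
    by apply/measurable_EFinP; apply: measurable_funTS; exact: continuous_measurable_fun (fl_cont _ _).
  have h := int_aff (k / (m - a)) a a m am.
  etransitivity; first exact: h.
  have hma : 0 < m - a by rewrite subr_gt0.
  congr (_%:E); rewrite subrr expr0n /= subr0 (gtr0_norm hma); field.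
  by rewrite gt_eqF.
- rewrite -(@integral_itv_bndoo _ _ _ _ true false); last first.
    by apply/measurable_EFinP; apply: measurable_funTS; exact: continuous_measurable_fun (fl_cont _ _).
  have h := int_aff (k / (m - a)) a m a am.
  etransitivity; first exact: h.
  have hma : m - a < 0 by rewrite subr_lt0.
  congr (_%:E); rewrite subrr expr0n /= (ltr0_norm hma); field.
  by rewrite lt_eqF.
- rewrite set_itvoo0 ?lexx // integral_set0 /= subrr normr0; congr (_%:E); ring.
Qed.

Definition cvx (K : set (R * R)) := forall (P Q : R * R) (l : R), K P -> K Q -> 0 <= l <= 1 ->
  K ((1 - l) * P.1 + l * Q.1, (1 - l) * P.2 + l * Q.2).

Lemma cvx_at (K : set (R * R)) P Q l p1 p2 : cvx K -> K P -> K Q -> 0 <= l <= 1 ->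
  p1 = (1 - l) * P.1 + l * Q.1 -> p2 = (1 - l) * P.2 + l * Q.2 -> K (p1, p2).
Proof. by move=> HK KP KQ Hl -> ->; apply: HK. Qed.

Lemma pc_in (a m k x : R) : Num.min a m < x < Num.max a m ->
  pc a m k x = k / (m - a) * (x - a).
Proof.
move=> Hx; rewrite /pc patchE mem_set //=; rewrite in_itv /= Hx.
Qed.

Lemma pc_out (a m k x : R) : ~~ (Num.min a m < x < Num.max a m) ->
  pc a m k x = 0.
Proof.
move=> Hx; rewrite /pc patchE ifF //; apply/negbTE.
apply/negP => /set_mem /=; rewrite in_itv /=; by apply/negP.

Qed.

Lemma piece_geo (K : set (R * R)) a m qa y1 y2 x y : cvx K ->
  K (a, qa) -> K (m, y1) -> K (m, y2) ->
  Num.min a m < x < Num.max a m ->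
  qa + (x - a) / (m - a) * (y1 - qa) < y <
    qa + (x - a) / (m - a) * (y1 - qa) + pc a m (y2 - y1) x ->
  K (x, y).
Proof.
move=> HK Ka K1 K2 Hx Hy.
rewrite pc_in // in Hy.
have [t01 tma] : 0 < (x - a) / (m - a) < 1 /\ (x - a) / (m - a) * (m - a) = x - a.
  have [am|am|am] := ltgtP a m.
  - move: Hx; rewrite (min_l (ltW am)) (max_r (ltW am)) => /andP[h1 h2].
    have ne : m - a != 0 by rewrite subr_eq0 gt_eqF.
    have e : (x - a) / (m - a) * (m - a) = x - a by field.
    split => //; apply/andP; split; nra.
  - move: Hx; rewrite (min_r (ltW am)) (max_l (ltW am)) => /andP[h1 h2].
    have ne : m - a != 0 by rewrite subr_eq0 lt_eqF.
    have e : (x - a) / (m - a) * (m - a) = x - a by field.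
    split => //; apply/andP; split; nra.
  - by move: Hx; rewrite am minxx maxxx => /andP[h1 h2]; move: (lt_trans h1 h2); rewrite ltxx.
move: t01 tma Hy; set t := (x - a) / (m - a) => /andP[t0 t1] tma Hy.
have ma0 : m - a != 0 by apply/negP => /eqP h; move: tma; rewrite h mulr0 => h2; nra.
have e2 : (y2 - y1) / (m - a) * (x - a) = t * (y2 - y1).
  rewrite -tma; field; exact: ma0.
rewrite e2 in Hy.
move: Hy => /andP[hy1 hy2].
have tn0 : t != 0 by rewrite gt_eqF.
set d := (y - qa) / t.
have yd : y = qa + t * d by rewrite /d; field.
have hd1 : y1 - qa < d by nra.
have hd2 : d < y2 - qa by nra.
have y21 : y2 - y1 != 0 by rewrite subr_eq0 gt_eqF //; lra.
set lam := (qa + d - y1) / (y2 - y1).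
have lame : lam * (y2 - y1) = qa + d - y1 by rewrite /lam; field.
have KM : K (m, qa + d).
  apply: (@cvx_at K _ _ lam _ _ HK K1 K2) => /=.
  - apply/andP; split; nra.
  - ring.
  - rewrite /lam; field; exact: y21.
apply: (@cvx_at K _ _ t _ _ HK Ka KM) => /=.
- apply/andP; split; lra.
- nra.
- rewrite yd; ring.
Qed.

Lemma t_bounds (a m x : R) : Num.min a m < x < Num.max a m ->
  0 < (x - a) / (m - a) < 1 /\ (x - a) / (m - a) * (m - a) = x - a.
Proof.
move=> Hx.
have [am|am|am] := ltgtP a m.
- move: Hx; rewrite (min_l (ltW am)) (max_r (ltW am)) => /andP[h1 h2].
  have ne : m - a != 0 by rewrite subr_eq0 gt_eqF.
  have e : (x - a) / (m - a) * (m - a) = x - a by field.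
  split => //; apply/andP; split; nra.
- move: Hx; rewrite (min_r (ltW am)) (max_l (ltW am)) => /andP[h1 h2].
  have ne : m - a != 0 by rewrite subr_eq0 lt_eqF.
  have e : (x - a) / (m - a) * (m - a) = x - a by field.
  split => //; apply/andP; split; nra.
- by move: Hx; rewrite am minxx maxxx => /andP[h1 h2]; move: (lt_trans h1 h2); rewrite ltxx.
Qed.

Lemma pc_ge0 (a m k x : R) : 0 <= k -> 0 <= pc a m k x.
Proof.
move=> k0; have [Hx|Hx] := boolP (Num.min a m < x < Num.max a m); last by rewrite pc_out.
rewrite pc_in //; have [/andP[t0 t1] _] := t_bounds _ _ _ Hx.
by rewrite mulrAC -mulrA; apply: mulr_ge0 => //; exact: ltW.
Qed.

Lemma tent_bound (K : set (R * R)) a m b qa qb y1 y2 y0 : cvx K -> a <= m <= b ->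
  K (a, qa) -> K (b, qb) -> K (m, y1) -> K (m, y2) -> y1 <= y2 ->
  y0 <= qa -> y0 <= qb -> y0 <= y1 ->
  exists lo len : R -> R, [/\ forall x, 0 <= len x,
    forall x y, lo x < y < lo x + len x -> K (x, y),
    forall x, y0 <= lo x,
    measurable_fun setT (EFin \o len) &
    (\int[leb]_x (EFin \o len) x = ((y2 - y1) * (b - a) / 2)%:E)%E].
Proof.
move=> HK /andP[am mb] Ka Kb K1 K2 y12 h0a h0b h01.
have k0 : 0 <= y2 - y1 by rewrite subr_ge0.
pose len x := pc a m (y2 - y1) x + pc b m (y2 - y1) x.
pose lo x := if Num.min a m < x < Num.max a m then qa + (x - a) / (m - a) * (y1 - qa)
  else if Num.min b m < x < Num.max b m then qb + (x - b) / (m - b) * (y1 - qb) else y0.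
exists lo, len; split.
- by move=> x; rewrite /len addr_ge0 // pc_ge0.
- move=> x y; rewrite /lo /len.
  have [Hx|Hx] := boolP (Num.min a m < x < Num.max a m).
    have Hx' : ~~ (Num.min b m < x < Num.max b m).
      move: Hx; rewrite (max_r am) (min_r mb) => /andP[_ h].
      by apply/negP => /andP[h' _]; move: (lt_trans h h'); rewrite ltxx.
    rewrite (pc_out _ _ _ _ Hx') addr0 => Hy.
    exact: piece_geo HK Ka K1 K2 Hx Hy.
  rewrite (pc_out _ _ _ _ Hx) add0r.
  have [Hx'|Hx'] := boolP (Num.min b m < x < Num.max b m).
    move=> Hy; exact: piece_geo HK Kb K1 K2 Hx' Hy.
  by rewrite (pc_out _ _ _ _ Hx') addr0 => /andP[h1 h2]; move: (lt_trans h1 h2); rewrite ltxx.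
- move=> x; rewrite /lo.
  have [Hx|Hx] := boolP (Num.min a m < x < Num.max a m).
    have [/andP[t0 t1] _] := t_bounds _ _ _ Hx; nra.
  have [Hx'|Hx'] := boolP (Num.min b m < x < Num.max b m) => //.
  have [/andP[t0 t1] _] := t_bounds _ _ _ Hx'; nra.
- apply/measurable_EFinP; apply: measurable_funD; apply/measurable_EFinP; exact: pc_meas.
- rewrite (_ : EFin \o len = fun x => (EFin \o pc a m (y2 - y1)) x + (EFin \o pc b m (y2 - y1)) x)%E; last first.
    by apply/funext => x.
  rewrite ge0_integralD //; first last.
  + exact: pc_meas.
  + by move=> x _; rewrite lee_fin pc_ge0.
  + exact: pc_meas.
  + by move=> x _; rewrite lee_fin pc_ge0.
  have h1 : 0 <= m - a by rewrite subr_ge0.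
  have h2 : m - b <= 0 by rewrite subr_le0.
  rewrite !pc_int -EFinD (ger0_norm h1) (ler0_norm h2).
  congr (_%:E); ring.
Qed.

Definition tri_concl (K : set (R * R)) (y0 h : R) :=
  exists lo len : R -> R, [/\ forall x, 0 <= len x,
    forall x y, lo x < y < lo x + len x -> K (x, y),
    forall x, y0 <= lo x,
    measurable_fun setT (EFin \o len) &
    (\int[leb]_x (EFin \o len) x = (h / 2)%:E)%E].

Lemma tri_bound (K : set (R * R)) e y0 p h : cvx K -> 0 <= h ->
  K (e, y0) -> K (e + 1, y0) -> K (p, y0 + h) -> tri_concl K y0 h.
Proof.
move=> HK h0 K1 K2 KX.
have conv a m b qa qb y1 y2 : a <= m <= b ->
  K (a, qa) -> K (b, qb) -> K (m, y1) -> K (m, y2) -> y1 <= y2 ->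
  y0 <= qa -> y0 <= qb -> y0 <= y1 -> (y2 - y1) * (b - a) = h -> tri_concl K y0 h.
  move=> amb Ka Kb Km1 Km2 y12 h1 h2 h3 eh.
  have [lo [len [? ? ? ? H5]]] := @tent_bound K _ _ _ _ _ _ _ y0 HK amb Ka Kb Km1 Km2 y12 h1 h2 h3.
  exists lo, len; split => //; rewrite H5 -eh; congr (_%:E); ring.
have [pe|pe] := ltP p e.
  have d0 : 0 < e + 1 - p by lra.
  have dn : e + 1 - p != 0 by rewrite gt_eqF.
  apply: (@conv p e (e + 1) (y0 + h) y0 y0 (y0 + h / (e + 1 - p))) => //.
  - apply/andP; split; lra.
  - apply: (@cvx_at K _ _ ((e - p) / (e + 1 - p)) _ _ HK KX K2) => /=.
    + apply/andP; split.
        by apply: divr_ge0; lra.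
      by rewrite ler_pdivrMr //; lra.
    + field; exact: dn.
    + field; exact: dn.
  - have : 0 <= h / (e + 1 - p) by apply: divr_ge0; lra.
    lra.
  - lra.
  - field; exact: dn.
have [pe1|pe1] := leP p (e + 1).
  apply: (@conv e p (e + 1) y0 y0 y0 (y0 + h)) => //.
  - by apply/andP; split.
  - apply: (@cvx_at K _ _ (p - e) _ _ HK K1 K2) => /=.
    + apply/andP; split; lra.
    + ring.
    + ring.
  - lra.
  - ring.
have d0 : 0 < p - e by lra.
have dn : p - e != 0 by rewrite gt_eqF.
apply: (@conv e (e + 1) p y0 (y0 + h) y0 (y0 + h / (p - e))) => //.
- apply/andP; split; lra.
- apply: (@cvx_at K _ _ (1 / (p - e)) _ _ HK K1 KX) => /=.
  + apply/andP; split.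
      by apply: divr_ge0; lra.
    by rewrite ler_pdivrMr //; lra.
  + field; exact: dn.
  + field; exact: dn.
- have : 0 <= h / (p - e) by apply: divr_ge0; lra.
  lra.
- lra.
- field; exact: dn.
Qed.

Lemma tri_bound_down (K : set (R * R)) e y0 p h : cvx K -> 0 <= h ->
  K (e, y0) -> K (e + 1, y0) -> K (p, y0 - h) ->
  exists lo len : R -> R, [/\ forall x, 0 <= len x,
    forall x y, lo x < y < lo x + len x -> K (x, y),
    forall x, lo x + len x <= y0,
    measurable_fun setT (EFin \o len) &
    (\int[leb]_x (EFin \o len) x = (h / 2)%:E)%E].
Proof.
move=> HK h0 K1 K2 KX.
pose K' := [set P : R * R | K (P.1, 2 * y0 - P.2)].
have HK' : cvx K'.
  move=> P Q l KP KQ Hl; rewrite /K' /=.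
  apply: (@cvx_at K _ _ l _ _ HK KP KQ Hl) => /=; ring.
have eK P1 P2 Q1 Q2 : K (P1, P2) -> P1 = Q1 -> P2 = Q2 -> K (Q1, Q2) by move=> ? <- <-.
have K1' : K' (e, y0) by apply: (eK _ _ _ _ K1) => //=; ring.
have K2' : K' (e + 1, y0) by apply: (eK _ _ _ _ K2) => //=; ring.
have KX' : K' (p, y0 + h) by apply: (eK _ _ _ _ KX) => //=; ring.
have [lo [len [H1 H2 H3 H4 H5]]] := @tri_bound K' e y0 p h HK' h0 K1' K2' KX'.
exists (fun x => 2 * y0 - lo x - len x), len; split => //.
- move=> x y Hy.
  have Hy' : lo x < 2 * y0 - y < lo x + len x.
    by move: Hy => /andP[? ?]; apply/andP; split; lra.
  by apply: (eK _ _ _ _ (H2 x (2 * y0 - y) Hy')) => //=; ring.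
- by move=> x; have := H3 x; lra.
Qed.


Lemma mono_int (f g : R -> \bar R) : (forall x, (0 <= f x)%E) -> (forall x, (f x <= g x)%E) ->
  (\int[leb]_x f x <= \int[leb]_x g x)%E.
Proof.
move=> f0 fg.
have g0 x : (0 <= g x)%E by apply: le_trans (f0 x) (fg x).
rewrite !ge0_integralE //.
apply: le_ereal_sup => _ [h hf <-]; exists h => // x.
apply: le_trans (hf x) _; rewrite !patch_setT; exact: fg.
Qed.

Lemma leb_mono (A B : set R) : A `<=` B -> (leb A <= leb B)%E.
Proof.
move=> AB; rewrite /lebesgue_measure /lebesgue_stieltjes_measure /measure_extension.
exact: le_outer_measure.
Qed.

Lemma pair_eta (P : R * R) : P = (P.1, P.2).
Proof. by case: P. Qed.

Lemma in_chull (S : set (R * R)) P : S P -> chull S P.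
Proof.
move=> SP; exists 1%N, (fun _ => 1), (fun _ => P).
split; first by move=> _; exact: ler01.
split; first by rewrite big_ord1.
split; first by [].
by rewrite !big_ord1 !mul1r -pair_eta.
Qed.

Definition K4 (E F A C : R * R) : set (R * R) :=
  [set P | exists w1 w2 w3 w4 : R, 0 <= w1 /\ 0 <= w2 /\ 0 <= w3 /\ 0 <= w4 /\
     w1 + w2 + w3 + w4 = 1 /\
     P = (w1 * E.1 + w2 * F.1 + w3 * A.1 + w4 * C.1,
          w1 * E.2 + w2 * F.2 + w3 * A.2 + w4 * C.2)].

Lemma K4_sub (E F A B C D : R * R) :
  K4 E F A C `<=` chull (segment E F `|` quad A B C D).
Proof.
move=> P [w1 [w2 [w3 [w4 [h1 [h2 [h3 [h4 [hs ->]]]]]]]]].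
exists 4%N, (fun i : 'I_4 => nth 0 [:: w1; w2; w3; w4] i),
  (fun i : 'I_4 => nth E [:: E; F; A; C] i).
split; first by case=> [[|[|[|[|i]]]] Hi].
split; first by rewrite !big_ord_recl big_ord0 /= addr0 !addrA.
split.
- case=> [[|[|[|[|i]]]] Hi] //=.
  + by left; apply: in_chull; left.
  + by left; apply: in_chull; right.
  + by right; apply: in_chull; left; left; left.
  + by right; apply: in_chull; left; right.
- by rewrite !big_ord_recl !big_ord0 /= !addr0 !addrA.
Qed.

Lemma K4_cvx (E F A C : R * R) : cvx (K4 E F A C).
Proof.
move=> P Q l [w1 [w2 [w3 [w4 [h1 [h2 [h3 [h4 [hs ->]]]]]]]]].
move=> [v1 [v2 [v3 [v4 [g1 [g2 [g3 [g4 [gs ->]]]]]]]]] /andP[l0 l1] /=.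
exists ((1 - l) * w1 + l * v1), ((1 - l) * w2 + l * v2),
  ((1 - l) * w3 + l * v3), ((1 - l) * w4 + l * v4).
split; first nra. split; first nra. split; first nra. split; first nra.
split.
  have -> : (1 - l) * w1 + l * v1 + ((1 - l) * w2 + l * v2) + ((1 - l) * w3 + l * v3) +
    ((1 - l) * w4 + l * v4) = (1 - l) * (w1 + w2 + w3 + w4) + l * (v1 + v2 + v3 + v4) by ring.
  by rewrite hs gs; ring.
congr pair; ring.
Qed.

Lemma leb_oo (a l : R) : 0 <= l -> leb `]a, a + l[ = l%:E.
Proof.
move=> l0; rewrite lebesgue_measure_itv /= lte_fin.
case: ifP => h.
  by rewrite -EFinB; congr (_%:E); ring.
have : l = 0 by move/negbT: h; rewrite -leNgt; lra.
by move=> ->.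
Qed.

End S.
Arguments K4 {R}.
Arguments K4_cvx {R}.
Arguments K4_sub {R}.
Arguments pair_eta {R}.
Arguments mono_int {R}.
Arguments leb_mono {R}.
Arguments leb_oo {R}.
Arguments cvx {R}.
Arguments tri_concl {R}.

Theorem mainTheorem5 (R : realType) (E F A B C D : R * R) (alpha : R) :
  E.2 = F.2 -> dist E F = 1 ->
  ccw_rectangle A B C D ->
  dist A B = 1 / 2 -> dist C D = 1 / 2 ->
  dist B C = 1 / 4 -> dist A D = 1 / 4 ->
  atan (1 / 2) <= alpha < atan (1 / 2) + pi ->
  A = ((A.1 + C.1) / 2 + Num.sqrt 5 / 8 * cos alpha,
       (A.2 + C.2) / 2 + Num.sqrt 5 / 8 * sin alpha) ->
  ((Num.sqrt 5 / 8 * sin alpha)%:E <=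
     mu2 (segment E F) (quad A B C D))%E.
Proof.
move=> hEF dEF _ _ _ _ _ _ hA.
set s := Num.sqrt 5 / 8 * sin alpha.
have hAC : A.2 - C.2 = 2 * s.
  have := congr1 snd hA => /= h; rewrite /s; lra.
pose K := K4 E F A C.
have HK : cvx K by apply: K4_cvx.
have Kat P x y : K P -> P.1 = x -> P.2 = y -> K (x, y).
  by move=> KP <- <-; rewrite -pair_eta.
have KE : K E.
  exists 1, 0, 0, 0; do 4 (split; first lra); split; first lra.
  by rewrite [LHS]pair_eta; congr pair; ring.
have KF : K F.
  exists 0, 1, 0, 0; do 4 (split; first lra); split; first lra.
  by rewrite [LHS]pair_eta; congr pair; ring.
have KA : K A.
  exists 0, 0, 1, 0; do 4 (split; first lra); split; first lra.
  by rewrite [LHS]pair_eta; congr pair; ring.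
have KC : K C.
  exists 0, 0, 0, 1; do 4 (split; first lra); split; first lra.
  by rewrite [LHS]pair_eta; congr pair; ring.
set y0 := E.2.
have [e [Ke Ke1]] : exists e, K (e, y0) /\ K (e + 1, y0).
  have h2 : Num.sqrt ((E.1 - F.1) ^+ 2) = 1.
    by rewrite -dEF /dist hEF subrr expr0n addr0.
  rewrite sqrtr_sqr in h2.
  case: (lerP E.1 F.1) => h.
    rewrite ler0_norm ?subr_le0 // in h2.
    exists E.1; split; first by apply: (Kat E).
    by apply: (Kat F) => //; lra.
  rewrite gtr0_norm ?subr_gt0 // in h2.
  exists F.1; split; first by apply: (Kat F).
  by apply: (Kat E) => //; lra.
have [hu [hu1 hu0 Tu]] : exists hu, [/\ A.2 - y0 <= hu, 0 <= hu & tri_concl K y0 hu].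
  case: (lerP 0 (A.2 - y0)) => h.
    exists (A.2 - y0); split => //.
    by apply: (@tri_bound _ K e y0 A.1 (A.2 - y0) HK h Ke Ke1); apply: (Kat A) => //; ring.
  exists 0; split => //; first lra.
  by apply: (@tri_bound _ K e y0 e 0 HK (lexx _) Ke Ke1); apply: (Kat _ _ _ Ke) => //; ring.
have [hd [hd1 hd0 Td]] : exists hd, [/\ y0 - C.2 <= hd, 0 <= hd &
    exists lo len : R -> R, [/\ forall x, 0 <= len x,
    forall x y, lo x < y < lo x + len x -> K (x, y),
    forall x, lo x + len x <= y0,
    measurable_fun setT (EFin \o len) &
    (\int[lebesgue_measure]_x (EFin \o len) x = (hd / 2)%:E)%E]].
  case: (lerP 0 (y0 - C.2)) => h.
    exists (y0 - C.2); split => //.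
    by apply: (@tri_bound_down _ K e y0 C.1 (y0 - C.2) HK h Ke Ke1); apply: (Kat C) => //; ring.
  exists 0; split => //; first lra.
  by apply: (@tri_bound_down _ K e y0 e 0 HK (lexx _) Ke Ke1); apply: (Kat _ _ _ Ke) => //; ring.
case: Tu => lo1 [len1 [L10 L1K L1y L1m L1i]].
case: Td => lo2 [len2 [L20 L2K L2y L2m L2i]].
rewrite /mu2 /area /product_measure1.
apply: (@le_trans _ _ (((hu + hd) / 2)%:E)); first by rewrite lee_fin; lra.
have -> : (((hu + hd) / 2)%:E = \int[lebesgue_measure]_x ((EFin \o len1) x + (EFin \o len2) x))%E.
  rewrite ge0_integralD //; first last.
  + by move=> x _; rewrite lee_fin.
  + by move=> x _; rewrite lee_fin.
  by rewrite L1i L2i -EFinD; congr (_%:E); field.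
apply: mono_int.
  by move=> x; rewrite adde_ge0 // lee_fin.
move=> x /=.
pose I1 : set R := `]lo1 x, lo1 x + len1 x[%classic.
pose I2 : set R := `]lo2 x, lo2 x + len2 x[%classic.
have mI : lebesgue_measure (I1 `|` I2) = ((len1 x)%:E + (len2 x)%:E)%E.
  rewrite measureU; first by congr (_ + _)%E; apply: leb_oo.
  - exact: measurable_itv.
  - exact: measurable_itv.
  rewrite /I1 /I2; apply/seteqP; split => // y [] /= H1 H2.
  move: H1 H2; rewrite !in_itv /= => /andP[h1 h2] /andP[h3 h4].
  by have := L1y x; have := L2y x; lra.
rewrite -mI; apply: leb_mono => y [] Hy; rewrite /xsection /=; apply: mem_set;
  apply: K4_sub.
  by apply: L1K; move: Hy; rewrite /I1 /= in_itv.
by apply: L2K; move: Hy; rewrite /I2 /= in_itv.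
Qed.
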